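(* Let $X,Y$ be real Hilbert spaces and $a:X\times Y\to\mathbb{R}\cup\{+\infty\}$ such that for every $y\in Y$ the function $a(\cdot,y)$ is proper and $\Phi_{lsc}$-convex on $X$, and for every $x\in X$ the function $a(x,\cdot)$ is concave on $Y$. Suppose that for every $\beta<\inf_{x\in X}\sup_{y\in Y}a(x,y)$ and every $\varepsilon>0$ there exist $y_1,y_2\in Y$ and $\bar x\in X$ with $\bar x\in\mathrm{dom}\,a(\cdot,y_1)\cap\mathrm{dom}\,a(\cdot,y_2)$, $a(\bar x,y_1)\ge\beta$, $a(\bar x,y_2)\ge\beta$, such that $a(\cdot,y_1)$ and $a(\cdot,y_2)$ satisfy $ZS(\varepsilon,\bar x)$. Then $\sup_{y\in Y}\inf_{x\in X}a(x,y)=\inf_{x\in X}\sup_{y\in Y}a(x,y)$.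
   Context: $\Phi_{lsc}$ is the class of functions $\varphi(x)=-a\|x\|^2+\langle v,x\rangle+c$ ($a\ge0$, $v\in X^*$, $c\in\mathbb{R}$); $\mathrm{supp}(f)=\{\varphi\in\Phi_{lsc}:\varphi\le f\}$; $f$ is $\Phi_{lsc}$-convex if $f=\sup\mathrm{supp}(f)$ pointwise; proper means $\mathrm{supp}(f)\ne\emptyset$ and $\mathrm{dom}(f)\ne\emptyset$. For $\varepsilon\ge0$, $\partial^\varepsilon_{lsc}f(\bar x)$ is the set of $(a,v)\in\mathbb{R}_+\times X^*$ with $f(x)-f(\bar x)\ge\langle v,x-\bar x\rangle-a\|x\|^2+a\|\bar x\|^2-\varepsilon$ for all $x\in X$. Functions $f,g$ satisfy $ZS(\varepsilon,\bar x)$ if $0=(0,0)\in\mathrm{co}(\partial^\varepsilon_{lsc}f(\bar x)\cup\partial^\varepsilon_{lsc}g(\bar x))$, convex hull in $\mathbb{R}\times X^*$. *)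

(* Defs.v *)
From Stdlib Require Import Reals List.
Import ListNotations.
Open Scope R_scope.
Set Implicit Arguments.

Inductive Rbar : Type := Fin (r : R) | p_infty | m_infty.

Definition Rbar_le (x y : Rbar) : Prop :=
  match x, y with
  | m_infty, _ => True
  | _, p_infty => True
  | Fin a, Fin b => a <= b
  | _, _ => False
  end.

Definition Rbar_lt (x y : Rbar) : Prop := Rbar_le x y /\ x <> y.

Definition is_sup (S : Rbar -> Prop) (l : Rbar) : Prop :=
  (forall z, S z -> Rbar_le z l) /\
  (forall u, (forall z, S z -> Rbar_le z u) -> Rbar_le l u).
Definition is_inf (S : Rbar -> Prop) (l : Rbar) : Prop :=
  (forall z, S z -> Rbar_le l z) /\
  (forall u, (forall z, S z -> Rbar_le u z) -> Rbar_le u l).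

Record HilbertSpace : Type := {
  hcar :> Type;
  hzero : hcar;
  hadd : hcar -> hcar -> hcar;
  hopp : hcar -> hcar;
  hscal : R -> hcar -> hcar;
  hinner : hcar -> hcar -> R;
  hadd_assoc : forall x y z, hadd x (hadd y z) = hadd (hadd x y) z;
  hadd_comm : forall x y, hadd x y = hadd y x;
  hadd_zero : forall x, hadd x hzero = x;
  hadd_opp : forall x, hadd x (hopp x) = hzero;
  hscal_assoc : forall a b x, hscal a (hscal b x) = hscal (a * b) x;
  hscal_one : forall x, hscal 1 x = x;
  hscal_distr_l : forall a x y, hscal a (hadd x y) = hadd (hscal a x) (hscal a y);
  hscal_distr_r : forall a b x, hscal (a + b) x = hadd (hscal a x) (hscal b x);
  hinner_sym : forall x y, hinner x y = hinner y x;
  hinner_add : forall x y z, hinner (hadd x y) z = hinner x z + hinner y z;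
  hinner_scal : forall a x y, hinner (hscal a x) y = a * hinner x y;
  hinner_pos : forall x, 0 <= hinner x x;
  hinner_def : forall x, hinner x x = 0 -> x = hzero;
  hcomplete : forall u : nat -> hcar,
    (forall eps, 0 < eps -> exists N, forall m n, (N <= m)%nat -> (N <= n)%nat ->
        sqrt (hinner (hadd (u m) (hopp (u n))) (hadd (u m) (hopp (u n)))) < eps) ->
    exists l, forall eps, 0 < eps -> exists N, forall n, (N <= n)%nat ->
        sqrt (hinner (hadd (u n) (hopp l)) (hadd (u n) (hopp l))) < eps
}.

Definition hsub {X : HilbertSpace} (x y : X) : X := hadd X x (hopp X y).
Definition hnorm2 {X : HilbertSpace} (x : X) : R := hinner X x x.
Definition hnorm {X : HilbertSpace} (x : X) : R := sqrt (hnorm2 x).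

Record Dual (X : HilbertSpace) : Type := {
  dfun :> X -> R;
  dfun_add : forall x y, dfun (hadd X x y) = dfun x + dfun y;
  dfun_scal : forall a x, dfun (hscal X a x) = a * dfun x;
  dfun_bounded : exists M, forall x, Rabs (dfun x) <= M * hnorm x
}.

Definition phi_lsc {X : HilbertSpace} (a : R) (v : Dual X) (c : R) (x : X) : R :=
  - a * hnorm2 x + v x + c.

Definition in_supp {X : HilbertSpace} (f : X -> Rbar) (a : R) (v : Dual X) (c : R) : Prop :=
  0 <= a /\ forall x, Rbar_le (Fin (phi_lsc a v c x)) (f x).

Definition Phi_lsc_convex {X : HilbertSpace} (f : X -> Rbar) : Prop :=
  forall x, is_sup (fun z => exists a v c, in_supp f a v c /\ z = Fin (phi_lsc a v c x)) (f x).

Definition in_dom {X : HilbertSpace} (f : X -> Rbar) (x : X) : Prop := f x <> p_infty.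

Definition proper {X : HilbertSpace} (f : X -> Rbar) : Prop :=
  (exists a v c, in_supp f a v c) /\ (exists x, in_dom f x).

(* concavity on Y of an R ∪ {+oo}-valued function: convex hypograph *)
Definition concave {Y : HilbertSpace} (g : Y -> Rbar) : Prop :=
  forall (y1 y2 : Y) (t r1 r2 : R), 0 <= t <= 1 ->
    Rbar_le (Fin r1) (g y1) -> Rbar_le (Fin r2) (g y2) ->
    Rbar_le (Fin (t * r1 + (1 - t) * r2))
            (g (hadd Y (hscal Y t y1) (hscal Y (1 - t) y2))).

(* (a,v) in the eps-subdifferential of f at xb
   (empty if f xb is not finite; only used at points of dom f) *)
Definition eps_subdiff {X : HilbertSpace} (eps : R) (f : X -> Rbar) (xb : X)
    (a : R) (v : Dual X) : Prop :=
  0 <= a /\ exists fxb, f xb = Fin fxb /\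
    forall x, Rbar_le (Fin (fxb + v (hsub x xb) - a * hnorm2 x + a * hnorm2 xb - eps)) (f x).

(* ZS(eps, xb): (0,0) belongs to the convex hull (finite convex combinations)
   of the union of the two eps-subdifferentials, in R x X^* *)
Definition ZS {X : HilbertSpace} (eps : R) (f g : X -> Rbar) (xb : X) : Prop :=
  exists l : list (R * (R * Dual X)),
    Forall (fun p => 0 <= fst p /\
               (eps_subdiff eps f xb (fst (snd p)) (snd (snd p)) \/
                eps_subdiff eps g xb (fst (snd p)) (snd (snd p)))) l /\
    fold_right Rplus 0 (map fst l) = 1 /\
    fold_right Rplus 0 (map (fun p => fst p * fst (snd p)) l) = 0 /\
    forall x : X, fold_right Rplus 0 (map (fun p : R * (R * Dual X) => fst p * dfun (snd (snd p)) x) l) = 0.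

Definition is_inf_sup {X Y : HilbertSpace} (a : X -> Y -> Rbar) (I : Rbar) : Prop :=
  is_inf (fun z => exists x, is_sup (fun w => exists y, w = a x y) z) I.
Definition is_sup_inf {X Y : HilbertSpace} (a : X -> Y -> Rbar) (S : Rbar) : Prop :=
  is_sup (fun z => exists y, is_inf (fun w => exists x, w = a x y) z) S.

(* Main.v *)
Require Import Defs.
From Stdlib Require Import Reals List Lra Classical.
Open Scope R_scope.

Lemma Rbar_le_trans (x y z : Rbar) : Rbar_le x y -> Rbar_le y z -> Rbar_le x z.
Proof. destruct x, y, z; simpl; intros; try lra; tauto. Qed.

Lemma Rbar_le_antisym (x y : Rbar) : Rbar_le x y -> Rbar_le y x -> x = y.
Proof.
  destruct x, y; simpl; intros; try tauto; try (f_equal; lra); reflexivity.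
Qed.

Lemma Rbar_below (z : Rbar) : z <> m_infty -> exists r, Rbar_le (Fin r) z.
Proof.
  destruct z; intros H. exists r; simpl; lra. exists 0; simpl; auto. congruence.
Qed.

Lemma exists_inf (E : Rbar -> Prop) : exists l, is_inf E l.
Proof.
  destruct (classic (E m_infty)) as [Hm|Hm].
  { exists m_infty; split; [intros; simpl; auto|]. intros u Hu. apply Hu; auto. }
  destruct (classic (exists r, E (Fin r))) as [[r0 Hr0]|Hf].
  2:{ exists p_infty; split.
      - intros z Hz; destruct z; simpl; auto. apply Hf; eauto.
      - intros u Hu; destruct u; simpl; auto. }
  destruct (classic (forall M, exists r, E (Fin r) /\ r < M)) as [Hub|Hb].
  { exists m_infty; split; [intros; simpl; auto|].
    intros u Hu; destruct u; simpl; auto.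
    - destruct (Hub r) as [r' [Hr' Hlt]]. specialize (Hu _ Hr'). simpl in Hu. lra.
    - specialize (Hu _ Hr0). simpl in Hu. auto. }
  assert (HB : exists M, forall r, E (Fin r) -> M <= r).
  { apply NNPP; intro Hn. apply Hb. intro M.
    apply NNPP; intro Hn2. apply Hn. exists M. intros r Hr.
    apply Rnot_lt_le; intro Hlt. apply Hn2. exists r; auto. }
  destruct HB as [M HM].
  assert (Hbd : bound (fun s => E (Fin (- s)))).
  { exists (- M). intros s Hs. specialize (HM _ Hs). lra. }
  assert (Hne : exists s, E (Fin (- s))).
  { exists (- r0). rewrite Ropp_involutive. auto. }
  destruct (completeness _ Hbd Hne) as [m [Hm1 Hm2]].
  exists (Fin (- m)); split.
  - intros z Hz. destruct z; simpl; auto.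
    assert (Hr : - r <= m) by (apply Hm1; rewrite Ropp_involutive; auto). lra.
  - intros u Hu. destruct u; simpl; auto.
    + assert (m <= - r). 2: lra.
      apply Hm2. intros s Hs. specialize (Hu _ Hs). simpl in Hu. lra.
    + specialize (Hu _ Hr0). simpl in Hu. auto.
Qed.

Lemma zs_combine (X : HilbertSpace) (f g : X -> Rbar) (xb : X) (beta eps : R)
  (Hf : Rbar_le (Fin beta) (f xb)) (Hg : Rbar_le (Fin beta) (g xb))
  (Hfv : forall x, f x <> m_infty) (Hgv : forall x, g x <> m_infty)
  (l : list (R * (R * Dual X)))
  (Hl : Forall (fun p => 0 <= fst p /\
               (eps_subdiff eps f xb (fst (snd p)) (snd (snd p)) \/
                eps_subdiff eps g xb (fst (snd p)) (snd (snd p)))) l) :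
  exists m1 m2, 0 <= m1 /\ 0 <= m2 /\ m1 + m2 = fold_right Rplus 0 (map fst l) /\
    forall x, exists r1 r2, Rbar_le (Fin r1) (f x) /\ Rbar_le (Fin r2) (g x) /\
      (beta - eps) * fold_right Rplus 0 (map fst l)
      + fold_right Rplus 0 (map (fun p : R * (R * Dual X) => fst p * dfun (snd (snd p)) (hsub x xb)) l)
      - fold_right Rplus 0 (map (fun p => fst p * fst (snd p)) l) * hnorm2 x
      + fold_right Rplus 0 (map (fun p => fst p * fst (snd p)) l) * hnorm2 xb
      <= m1 * r1 + m2 * r2.
Proof.
  induction Hl as [|p l [Hp Hside] Hl IH].
  - exists 0, 0. split; [lra|split; [lra|split; [simpl; lra|]]].
    intro x. destruct (Rbar_below _ (Hfv x)) as [r1 H1].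
    destruct (Rbar_below _ (Hgv x)) as [r2 H2].
    exists r1, r2. split; [auto|split; [auto|]]. simpl. lra.
  - destruct IH as [m1 [m2 [Hm1 [Hm2 [Hs IH]]]]].
    destruct p as [lam [al v]]. simpl in Hp, Hside |- *.
    destruct Hside as [[Hal [fxb [Heq Hb]]]|[Hal [fxb [Heq Hb]]]].
    + exists (m1 + lam), m2. split; [lra|split; [lra|split; [lra|]]].
      intro x. destruct (IH x) as [r1 [r2 [H1 [H2 H3]]]].
      set (c := fxb + v (hsub x xb) - al * hnorm2 x + al * hnorm2 xb - eps).
      exists (Rmax r1 c), r2. split; [|split; [auto|]].
      * apply Rmax_case; auto; apply Hb.
      * rewrite Heq in Hf. simpl in Hf.
        assert (A1 : m1 * r1 <= m1 * Rmax r1 c) by (apply Rmult_le_compat_l; auto; apply Rmax_l).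
        assert (A2 : lam * c <= lam * Rmax r1 c) by (apply Rmult_le_compat_l; auto; apply Rmax_r).
        assert (A3 : lam * beta <= lam * fxb) by (apply Rmult_le_compat_l; auto).
        unfold c in *. lra.
    + exists m1, (m2 + lam). split; [lra|split; [lra|split; [lra|]]].
      intro x. destruct (IH x) as [r1 [r2 [H1 [H2 H3]]]].
      set (c := fxb + v (hsub x xb) - al * hnorm2 x + al * hnorm2 xb - eps).
      exists r1, (Rmax r2 c). split; [auto|split].
      * apply Rmax_case; auto; apply Hb.
      * rewrite Heq in Hg. simpl in Hg.
        assert (A1 : m2 * r2 <= m2 * Rmax r2 c) by (apply Rmult_le_compat_l; auto; apply Rmax_l).
        assert (A2 : lam * c <= lam * Rmax r2 c) by (apply Rmult_le_compat_l; auto; apply Rmax_r).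
        assert (A3 : lam * beta <= lam * fxb) by (apply Rmult_le_compat_l; auto).
        unfold c in *. lra.
Qed.

Lemma le_from_approx (I S : Rbar) :
  (forall b eps, Rbar_lt (Fin b) I -> 0 < eps -> Rbar_le (Fin (b - eps)) S) ->
  Rbar_le I S.
Proof.
  intro H. destruct I as [i| |]; destruct S as [s| |]; simpl; auto.
  - apply Rnot_lt_le; intro Hlt.
    assert (K := H ((s + i) / 2) ((i - s) / 4)).
    simpl in K. assert (K' : (s + i) / 2 - (i - s) / 4 <= s).
    { apply K; [split; [simpl; lra| intro E; injection E; lra] | lra]. }
    lra.
  - apply (H (i - 1) 1); [split; [simpl; lra| intro E; injection E; lra] | lra].
  - assert (K' : (s + 2) - 1 <= s).
    { apply (H (s + 2) 1); [split; [simpl; auto| discriminate] | lra]. }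
    lra.
  - apply (H 0 1); [split; [simpl; auto| discriminate] | lra].
Qed.

Theorem mainTheorem13 (X Y : HilbertSpace) (a : X -> Y -> Rbar)
  (Ha_val : forall x y, a x y <> m_infty)
  (Ha_x : forall y : Y, proper (fun x => a x y) /\ Phi_lsc_convex (fun x => a x y))
  (Ha_y : forall x : X, concave (a x))
  (Hzs : forall I, is_inf_sup a I ->
     forall beta eps : R, Rbar_lt (Fin beta) I -> 0 < eps ->
     exists (y1 y2 : Y) (xb : X),
       in_dom (fun x => a x y1) xb /\ in_dom (fun x => a x y2) xb /\
       Rbar_le (Fin beta) (a xb y1) /\ Rbar_le (Fin beta) (a xb y2) /\
       ZS eps (fun x => a x y1) (fun x => a x y2) xb) :
  forall S I, is_sup_inf a S -> is_inf_sup a I -> S = I.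
Proof.
  intros S I HS HI.
  assert (HSI : Rbar_le S I).
  { apply (proj2 HI). intros z [x Hz]. apply (proj2 HS). intros w [y Hw].
    apply Rbar_le_trans with (a x y).
    - apply (proj1 Hw). exists x; reflexivity.
    - apply (proj1 Hz). exists y; reflexivity. }
  assert (HIS : Rbar_le I S).
  { apply le_from_approx. intros b eps Hlt Heps.
    destruct (Hzs I HI b eps Hlt Heps) as
      [y1 [y2 [xb [D1 [D2 [B1 [B2 [l [Hl [H1 [H2 H3]]]]]]]]]]].
    destruct (@zs_combine X (fun x => a x y1) (fun x => a x y2) xb b eps B1 B2
               (fun x => Ha_val x y1) (fun x => Ha_val x y2) l Hl)
      as [m1 [m2 [Hm1 [Hm2 [Hs Hc]]]]].
    set (yt := hadd Y (hscal Y m1 y1) (hscal Y (1 - m1) y2)).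
    destruct (exists_inf (fun w => exists x, w = a x yt)) as [z Hz].
    apply Rbar_le_trans with z; [| apply (proj1 HS); exists yt; exact Hz].
    apply (proj2 Hz). intros w [x ->].
    destruct (Hc x) as [r1 [r2 [R1 [R2 R3]]]].
    rewrite H1, H2, (H3 (hsub x xb)) in R3.
    apply Rbar_le_trans with (Fin (m1 * r1 + (1 - m1) * r2)).
    - simpl. replace (1 - m1) with m2 by lra. lra.
    - apply Ha_y; [lra | exact R1 | exact R2]. }
  apply Rbar_le_antisym; auto.
Qed.
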